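(* Let $q>0$. (1) There exists a unique maximizer $A^*$ of $w$ over $[0,D^*]$. It satisfies $A^*\le\sqrt{\max((q-1)/2,0)}$, and for $0\le A\le D^*$ one has $w'(A)\le0$ if and only if $A\ge A^*$. (2) Moreover, $A^*=0$ if and only if $q\le1$. Here $$w(A):=\frac{1}{G_q(A)}\left[(D^* )^q\frac{(F_q+G_q)(A)}{(F_q+G_q)(D^* )}-A^q\right],\quad 0\le A\le D^*.$$
   Context: $F_q(y):=\int_0^\infty u^{q-1}e^{yu-u^2/2}\,\mathrm{d}u$ and $G_q(y):=F_q(-y)$ for $y\in\mathbb{R}$. $D^*>0$ is the unique positive root of $q-D(F_q+G_q)'(D)/(F_q+G_q)(D)=0$. *)

(* Defs.v *)
From Stdlib Require Import Reals.
From Coquelicot Require Import Coquelicot.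
Open Scope R_scope.

(* A^q for A >= 0 (with 0^q = 0, q > 0); extended by 0 for A <= 0. *)
Definition powq (A q : R) : R := if Rlt_dec 0 A then Rpower A q else 0.

Definition Fq (q y : R) : R :=
  RInt_gen (fun u => Rpower u (q - 1) * exp (y * u - u ^ 2 / 2))
           (at_right 0) (Rbar_locally p_infty).

Definition Gq (q y : R) : R := Fq q (- y).

Definition FGq (q : R) : R -> R := fun y => Fq q y + Gq q y.

Definition Dstar_eq (q D : R) : Prop :=
  q - D * Derive (FGq q) D / FGq q D = 0.

Definition wfun (q Ds : R) (A : R) : R :=
  / Gq q A * (powq Ds q * FGq q A / FGq q Ds - powq A q).

(* f has right derivative l (in the extended reals) at x. At interior
   points where f is differentiable this is the ordinary derivative; at
   the endpoint 0 it is the one-sided derivative. *)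
Definition is_rderiv (f : R -> R) (x : R) (l : Rbar) : Prop :=
  filterlim (fun h => (f (x + h) - f x) / h) (at_right 0) (Rbar_locally l).

(* Main.v *)
Require Import Defs.
From Stdlib Require Import Reals.
From Coquelicot Require Import Coquelicot.
Open Scope R_scope.
From Stdlib Require Import Lra Classical.
Notation AT := (at_right 0).
Notation PI := (Rbar_locally p_infty).

Lemma exp_le' a b : a <= b -> exp a <= exp b.
Proof. intros [H|H]; [left; apply exp_increasing; auto| subst; lra]. Qed.

Lemma cmult (f g : R -> R) x : continuous f x -> continuous g x -> continuous (fun y => f y * g y) x.
Proof. intros; apply (@continuous_mult R_UniformSpace R_AbsRing); auto. Qed.

Lemma Rpower_cont a x : 0 < x -> continuous (fun u => Rpower u a) x.
Proof.
  intros Hx. apply (@ex_derive_continuous R_AbsRing R_NormedModule). eexists.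
  apply is_derive_Reals. apply derivable_pt_lim_power; auto.
Qed.

Lemma Rpower_pos u a : 0 < Rpower u a.
Proof. unfold Rpower; apply exp_pos. Qed.

Lemma ln_le_id u : 0 < u -> ln u <= u.
Proof. intros Hu. pose proof (exp_ineq1_le (ln u)). rewrite exp_ln in H; lra. Qed.

Definition kk p y u := Rpower u (p-1) * exp (y*u - u^2/2).

Lemma kk_pos p y u : 0 < kk p y u.
Proof. unfold kk. apply Rmult_lt_0_compat; [apply Rpower_pos|apply exp_pos]. Qed.

Lemma kk_cont p y u : 0 < u -> continuous (kk p y) u.
Proof.
  intros Hu. unfold kk. apply cmult. now apply Rpower_cont.
  apply continuous_exp_comp. apply (@ex_derive_continuous R_AbsRing R_NormedModule). auto_derive. auto.
Qed.

Lemma kk_bound1 p y u : 0 < u <= 1 -> kk p y u <= exp (Rabs y) * Rpower u (p-1).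
Proof.
  intros Hu. unfold kk. rewrite Rmult_comm. apply Rmult_le_compat_r.
  left; apply Rpower_pos. apply exp_le'.
  assert (y*u <= Rabs y * u) by (apply Rmult_le_compat_r; [lra|apply Rle_abs]).
  assert (Rabs y * u <= Rabs y) by (pose proof (Rabs_pos y); nra). nra.
Qed.

Definition Kc p y := exp ((Rabs (p-1) + Rabs y + 1)^2/2).

Lemma kk_bound2 p y u : 1 <= u -> kk p y u <= Kc p y * exp (-u).
Proof.
  intros Hu. unfold kk, Kc, Rpower. rewrite <- !exp_plus. apply exp_le'.
  assert (0 <= ln u) by (rewrite <- ln_1; apply ln_le; lra).
  assert (ln u <= u) by (apply ln_le_id; lra).
  assert ((p-1) * ln u <= Rabs (p-1) * u).
  { apply Rle_trans with (Rabs (p-1) * ln u).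
    apply Rmult_le_compat_r; auto; apply Rle_abs.
    apply Rmult_le_compat_l; auto; apply Rabs_pos. }
  assert (y*u <= Rabs y * u) by (apply Rmult_le_compat_r; [lra|apply Rle_abs]).
  set (k := Rabs (p-1) + Rabs y). assert (0 <= k) by (unfold k; pose proof (Rabs_pos (p-1)); pose proof (Rabs_pos y); lra).
  assert (Rabs (p - 1) * u + Rabs y * u = k * u) by (unfold k; ring).
  assert (Hsq: 0 <= (u - (k+1))^2) by (apply pow2_ge_0).
  fold k. 
  assert (E: (u - (k+1))^2 = u^2 - 2*k*u - 2*u + (k+1)^2) by ring.
  rewrite E in Hsq. lra.
Qed.

Lemma rint_bound (f : R -> R) p K1 K2 :
  0 < p -> 0 <= K1 -> 0 <= K2 ->
  (forall x, 0 < x -> 0 <= f x) -> (forall x, 0 < x -> continuous f x) ->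
  (forall x, 0 < x <= 1 -> f x <= K1 * Rpower x (p-1)) ->
  (forall x, 1 <= x -> f x <= K2 * exp (-x)) ->
  forall a b, 0 < a -> a < b -> RInt f a b <= K1 / p + K2.
Proof.
  intros Hp HK1 HK2 Hpos Hc H1 H2 a b Ha Hab.
  set (a' := Rmin a 1). set (b' := Rmax b 1).
  assert (Ha' : 0 < a' /\ a' <= a /\ a' <= 1) by (unfold a'; destruct (Rle_dec a 1); [rewrite Rmin_left|rewrite Rmin_right]; lra).
  assert (Hb' : b <= b' /\ 1 <= b') by (unfold b'; destruct (Rle_dec b 1); [rewrite Rmax_right|rewrite Rmax_left]; lra).
  assert (Ex: forall u v, 0 < u -> u <= v -> ex_RInt f u v).
  { intros u v Hu Huv; apply (@ex_RInt_continuous R_CompleteNormedModule); intros z Hz.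
    apply Hc. rewrite Rmin_left in Hz by lra. lra. }
  apply Rle_trans with (RInt f a' b').
  {
    rewrite <- (RInt_Chasles f a' a b') by (apply Ex; lra).
    rewrite <- (RInt_Chasles f a b b') by (apply Ex; lra).
    assert (0 <= RInt f a' a) by (apply RInt_ge_0; [lra|apply Ex; lra|intros; apply Hpos; lra]).
    assert (0 <= RInt f b b') by (apply RInt_ge_0; [lra|apply Ex; lra|intros; apply Hpos; lra]).
    unfold plus; simpl; lra. }
  rewrite <- (RInt_Chasles f a' 1 b') by (apply Ex; lra).
  unfold plus; simpl.
  assert (I1 : RInt f a' 1 <= K1 / p).
  { assert (Hi : is_RInt (fun x => K1 * Rpower x (p-1)) a' 1 (K1 * Rpower 1 p / p - K1 * Rpower a' p / p)).
    { eapply (is_RInt_derive (fun x => K1 * Rpower x p / p)).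
      - intros x Hx. rewrite Rmin_left in Hx by lra. rewrite Rmax_right in Hx by lra.
        apply is_derive_Reals.
        replace (K1 * Rpower x (p-1)) with (K1 * (p * Rpower x (p-1)) / p) by (field; lra).
        unfold Rdiv. apply derivable_pt_lim_scal_right. apply derivable_pt_lim_scal.
        apply derivable_pt_lim_power; lra.
      - intros x Hx. rewrite Rmin_left in Hx by lra. rewrite Rmax_right in Hx by lra.
        apply cmult. apply continuous_const. apply Rpower_cont; lra. }
    apply Rle_trans with (K1 * Rpower 1 p / p - K1 * Rpower a' p / p).
    { rewrite <- (is_RInt_unique _ _ _ _ Hi). apply RInt_le; auto. lra.
      apply Ex; lra. eexists; eauto. intros; apply H1; lra. }
    replace (Rpower 1 p) with 1 by (unfold Rpower; rewrite ln_1, Rmult_0_r, exp_0; auto). pose proof (Rpower_pos a' p).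
    assert (0 <= K1 * Rpower a' p / p) by (apply Rmult_le_pos; [apply Rmult_le_pos; lra| left; apply Rinv_0_lt_compat; lra]).
    unfold Rdiv in *. lra. }
  assert (I2 : RInt f 1 b' <= K2).
  { assert (Hi : is_RInt (fun x => K2 * exp (-x)) 1 b' (- K2 * exp (- b') - (- K2 * exp (-1)))).
    { eapply (is_RInt_derive (fun x => - K2 * exp (-x))).
      - intros x Hx. auto_derive. auto. ring.
      - intros x Hx. apply cmult. apply continuous_const.
        apply continuous_exp_comp. apply (@ex_derive_continuous R_AbsRing R_NormedModule). auto_derive. auto. }
    apply Rle_trans with (- K2 * exp (- b') - (- K2 * exp (-1))).
    { rewrite <- (is_RInt_unique _ _ _ _ Hi). apply RInt_le; auto. lra.
      apply Ex; lra. eexists; eauto. intros; apply H2; lra. }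
    assert (exp (-1) <= 1) by (rewrite <- exp_0; apply exp_le'; lra).
    pose proof (exp_pos (-b')). nra. }
  lra.
Qed.

Lemma rint_mono (f : R -> R) a a0 b0 b :
  (forall x, 0 < x -> 0 <= f x) -> (forall x, 0 < x -> continuous f x) ->
  0 < a -> a <= a0 -> a0 <= b0 -> b0 <= b ->
  RInt f a0 b0 <= RInt f a b.
Proof.
  intros Hp Hc Ha H1 H2 H3.
  assert (Ex: forall u v, 0 < u -> u <= v -> ex_RInt f u v).
  { intros u v Hu Huv; apply (@ex_RInt_continuous R_CompleteNormedModule); intros z Hz.
    apply Hc. rewrite Rmin_left in Hz by lra. lra. }
  rewrite <- (RInt_Chasles f a a0 b) by (apply Ex; lra).
  rewrite <- (RInt_Chasles f a0 b0 b) by (apply Ex; lra).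
  assert (0 <= RInt f a a0).
  { apply RInt_ge_0; [lra|apply Ex; lra|intros; apply Hp; lra]. }
  assert (0 <= RInt f b0 b).
  { apply RInt_ge_0; [lra|apply Ex; lra|intros; apply Hp; lra]. }
  unfold plus; simpl. lra.
Qed.

Lemma gen_exists (f : R -> R) (M : R) :
  (forall x, 0 < x -> 0 <= f x) -> (forall x, 0 < x -> continuous f x) ->
  (forall a b, 0 < a -> a < b -> RInt f a b <= M) ->
  exists l, is_RInt_gen f AT PI l /\
    (forall a b, 0 < a -> a < b -> RInt f a b <= l) /\ l <= M.
Proof.
  intros Hp Hc HM.
  set (E := fun r => exists a b, 0 < a /\ a < b /\ r = RInt f a b).
  assert (Hb : bound E).
  { exists M. intros r [a [b [Ha [Hab ->]]]]. apply HM; lra. }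
  assert (Hne : exists x, E x).
  { exists (RInt f 1 2). exists 1, 2. repeat split; lra. }
  destruct (completeness E Hb Hne) as [l [Hub Hlub]].
  exists l. split; [| split].
  - refine (proj2 (filterlimi_locally _ _) _).
    intros eps.
    assert (Hx : exists a0 b0, 0 < a0 /\ a0 < b0 /\ l - eps < RInt f a0 b0).
    { apply NNPP. intros Hn.
      assert (l <= l - eps).
      { apply Hlub. intros r [a [b [Ha [Hab ->]]]].
        apply Rnot_lt_le. intro Hlt. apply Hn. exists a, b. repeat split; lra. }
      destruct eps as [e He]; simpl in *; lra. }
    destruct Hx as [a0 [b0 [Ha0 [Hab0 Hlt]]]].
    apply Filter_prod with (fun a => 0 < a < a0) (fun b => b0 < b).
    + exists (mkposreal a0 Ha0). intros y Hy Hy0.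
      unfold ball in Hy; simpl in Hy; unfold AbsRing_ball, abs, minus, plus, opp in Hy; simpl in Hy.
      rewrite Ropp_0, Rplus_0_r in Hy. apply Rabs_def2 in Hy. lra.
    + exists b0. auto.
    + intros a b Ha Hb'. simpl.
      exists (RInt f a b). split.
      * apply (@RInt_correct R_CompleteNormedModule), (@ex_RInt_continuous R_CompleteNormedModule). intros z Hz. apply Hc.
        rewrite Rmin_left in Hz by lra. lra.
      * assert (RInt f a0 b0 <= RInt f a b) by (apply rint_mono; auto; lra).
        assert (RInt f a b <= l) by (apply Hub; exists a, b; repeat split; lra).
        unfold ball; simpl; unfold AbsRing_ball, abs, minus, plus, opp; simpl.
        apply Rabs_def1; destruct eps; simpl in *; lra.
  - intros a b Ha Hab. apply Hub. exists a, b. auto.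
  - apply Hlub. intros r [a [b [Ha [Hab ->]]]]. apply HM; lra.
Qed.

Lemma F_is p y : 0 < p -> is_RInt_gen (kk p y) AT PI (Fq p y).
Proof.
  intros Hp.
  destruct (gen_exists (kk p y) (exp (Rabs y) / p + Kc p y)) as [l [Hl _]].
  - intros; left; apply kk_pos.
  - intros; apply kk_cont; auto.
  - apply (rint_bound _ p); auto.
    + left; apply exp_pos.
    + unfold Kc; left; apply exp_pos.
    + intros; left; apply kk_pos.
    + intros; apply kk_cont; auto.
    + intros; apply kk_bound1; auto.
    + intros; apply kk_bound2; auto.
  - unfold Fq. replace (RInt_gen (fun u => Rpower u (p - 1) * exp (y * u - u ^ 2 / 2)) AT PI) with l. auto.
    symmetry. apply (is_RInt_gen_unique (fun u => Rpower u (p - 1) * exp (y * u - u ^ 2 / 2))). exact Hl.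
Qed.

Lemma F_pos p y : 0 < p -> 0 < Fq p y.
Proof.
  intros Hp.
  destruct (gen_exists (kk p y) (exp (Rabs y) / p + Kc p y)) as [l [Hl [Hge _]]].
  - intros; left; apply kk_pos.
  - intros; apply kk_cont; auto.
  - apply (rint_bound _ p); auto.
    + left; apply exp_pos.
    + unfold Kc; left; apply exp_pos.
    + intros; left; apply kk_pos.
    + intros; apply kk_cont; auto.
    + intros; apply kk_bound1; auto.
    + intros; apply kk_bound2; auto.
  - assert (E: Fq p y = l).
    { apply (is_RInt_gen_unique (fun u => Rpower u (p - 1) * exp (y * u - u ^ 2 / 2))). exact Hl. }
    rewrite E. apply Rlt_le_trans with (RInt (kk p y) 1 2); [|apply Hge; lra].
    apply Rle_lt_trans with (RInt (fun _ => 0) 1 2).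
    { rewrite RInt_const. unfold scal; simpl; unfold mult; simpl; lra. }
    apply RInt_lt. lra. intros; apply kk_cont; lra. intros; apply continuous_const.
    intros; apply kk_pos.
Qed.

Lemma exp_taylor_bound t : 0 <= exp t - 1 - t <= t^2 * exp (Rabs t).
Proof.
  pose proof (exp_ineq1_le t). split. lra.
  destruct (Rle_dec 0 t) as [Ht|Ht].
  - rewrite Rabs_right by lra.
    pose proof (exp_ineq1_le (-t)).
    assert (E: exp t * exp (-t) = 1) by (rewrite <- exp_plus; replace (t + -t) with 0 by ring; apply exp_0).
    assert (exp t - 1 <= t * exp t).
    { pose proof (exp_pos t). nra. }
    assert (exp t - 1 - t <= t * (exp t - 1)) by nra.
    assert (t * (exp t - 1) <= t * (t * exp t)) by (apply Rmult_le_compat_l; lra).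
    nra.
  - rewrite Rabs_left by lra. set (s := -t).
    replace t with (-s) by (unfold s; ring).
    assert (Hs: 0 < s) by (unfold s; lra).
    pose proof (exp_ineq1_le s). pose proof (exp_ineq1_le (-s)).
    assert (E: exp s * exp (-s) = 1) by (rewrite <- exp_plus; replace (s + -s) with 0 by ring; apply exp_0).
    assert (exp (-s) * (1+s) <= 1).
    { pose proof (exp_pos (-s)). nra. }
    assert (exp (-s) - 1 + s <= s * (1 - exp (-s))) by nra.
    assert (s * (1 - exp (-s)) <= s * s) by (apply Rmult_le_compat_l; lra).
    assert (1 <= exp s) by lra.
    replace (- - s) with s by ring. replace ((-s)^2) with (s*s) by ring.
    assert (s * s <= s * s * exp s) by (assert (0 <= s*s) by nra; nra).
    lra.
Qed.

Lemma kk_shift p y h u : kk p (y+h) u = kk p y u * exp (h*u).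
Proof. unfold kk. rewrite Rmult_assoc, <- exp_plus. f_equal. f_equal. ring. Qed.

Lemma kk_succ p y u : 0 < u -> kk (p+1) y u = u * kk p y u.
Proof.
  intros Hu. unfold kk. replace (p+1-1) with ((p-1)+1) by ring.
  rewrite Rpower_plus, Rpower_1 by auto. ring.
Qed.

Lemma kk_2 p y u : 0 < u -> kk (p+2) (y+1) u = u^2 * exp u * kk p y u.
Proof.
  intros Hu. replace (p+2) with ((p+1)+1) by ring.
  rewrite kk_succ, kk_succ, kk_shift by auto. rewrite Rmult_1_l. ring.
Qed.

Lemma norm_R (x : R) : norm x = Rabs x.
Proof. reflexivity. Qed.

Lemma F_deriv p y : 0 < p -> derivable_pt_lim (Fq p) y (Fq (p+1) y).
Proof.
  intros Hp.
  set (C := Fq (p+2) (y+1)).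
  assert (HC : 0 < C) by (apply F_pos; lra).
  assert (Key : forall h, Rabs h <= 1 ->
    Rabs (Fq p (y+h) - Fq p y - h * Fq (p+1) y) <= h^2 * C).
  { intros h Hh.
    pose proof (is_RInt_gen_minus _ _ _ _ (F_is p (y+h) Hp) (F_is p y Hp)) as H12.
    assert (H3 := F_is (p+1) y ltac:(lra)). apply (is_RInt_gen_scal _ h) in H3.
    pose proof (is_RInt_gen_minus _ _ _ _ H12 H3) as Hf.
    assert (Hg := F_is (p+2) (y+1) ltac:(lra)). apply (is_RInt_gen_scal _ (h^2)) in Hg.
    assert (HN : norm (minus (minus (Fq p (y + h)) (Fq p y)) (scal h (Fq (p + 1) y))) <= scal (h ^ 2) (Fq (p + 2) (y + 1))).
    2:{ rewrite norm_R in HN. unfold minus, plus, opp, scal in HN; simpl in HN.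
    unfold mult in HN; simpl in HN. unfold C.
    replace (Fq p (y + h) - Fq p y - h * Fq (p + 1) y) with (Fq p (y + h) + - Fq p y + - (h * Fq (p + 1) y)) by ring.
    apply HN. }
    eapply (@RInt_gen_norm R_CompleteNormedModule AT PI _ _ _ _ _ _ _ _ Hf Hg). Unshelve.
    - apply Filter_prod with (fun a => 0 < a < 1) (fun b => 1 < b).
      + exists (mkposreal 1 Rlt_0_1). intros z Hz Hz0. unfold ball in Hz; simpl in Hz.
        unfold AbsRing_ball, abs, minus, plus, opp in Hz; simpl in Hz.
        rewrite Ropp_0, Rplus_0_r in Hz. apply Rabs_def2 in Hz. lra.
      + exists 1. auto.
      + intros a b Ha Hb. simpl. lra.
    - apply Filter_prod with (fun a => 0 < a) (fun b => True).
      + exists (mkposreal 1 Rlt_0_1). intros z Hz Hz0. auto.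
      + exists 0. auto.
      + intros a b Ha _ x Hx. simpl in Hx. assert (Hx0 : 0 < x) by lra.
        enough (Hgoal: Rabs (kk p (y+h) x - kk p y x - h * kk (p+1) y x) <= h^2 * kk (p+2) (y+1) x) by exact Hgoal.
        rewrite kk_shift, kk_succ, kk_2 by auto.
        replace (kk p y x * exp (h * x) - kk p y x - h * (x * kk p y x))
          with (kk p y x * (exp (h*x) - 1 - h*x)) by ring.
        pose proof (exp_taylor_bound (h*x)) as [T1 T2].
        pose proof (kk_pos p y x).
        rewrite Rabs_right by (apply Rle_ge; apply Rmult_le_pos; lra).
        assert (exp (Rabs (h*x)) <= exp x).
        { apply exp_le'. rewrite Rabs_mult, (Rabs_right x) by lra.
          assert (0 <= Rabs h) by apply Rabs_pos. nra. }
        assert ((h*x)^2 * exp (Rabs (h*x)) <= h^2 * (x^2 * exp x)).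
        { replace ((h*x)^2) with (h^2 * x^2) by ring. rewrite Rmult_assoc.
          apply Rmult_le_compat_l. nra. apply Rmult_le_compat_l. nra. auto. }
        apply Rle_trans with (kk p y x * ((h*x)^2 * exp (Rabs (h*x)))).
        apply Rmult_le_compat_l; lra.
        replace (h ^ 2 * (x ^ 2 * exp x * kk p y x)) with (kk p y x * (h^2 * (x^2 * exp x))) by ring.
        apply Rmult_le_compat_l; lra. }
  intros eps Heps.
  assert (Hd : 0 < Rmin 1 (eps / (C+1))).
  { apply Rmin_pos. lra. apply Rdiv_lt_0_compat; lra. }
  exists (mkposreal _ Hd). intros h Hh0 Hh. simpl in Hh.
  assert (Hh1 : Rabs h <= 1) by (pose proof (Rmin_l 1 (eps/(C+1))); lra).
  assert (Hh2 : Rabs h < eps / (C+1)) by (pose proof (Rmin_r 1 (eps/(C+1))); lra).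
  specialize (Key h Hh1).
  replace ((Fq p (y + h) - Fq p y) / h - Fq (p + 1) y) with ((Fq p (y + h) - Fq p y - h * Fq (p + 1) y) / h) by (field; auto).
  unfold Rdiv. rewrite Rabs_mult, Rabs_inv.
  assert (0 < Rabs h) by (apply Rabs_pos_lt; auto).
  apply Rle_lt_trans with (h^2 * C * / Rabs h).
  { apply Rmult_le_compat_r; auto. left; apply Rinv_0_lt_compat; auto. }
  replace (h^2) with (Rabs h * Rabs h) by (rewrite <- Rabs_mult; rewrite Rabs_right; [ring| apply Rle_ge; nra]).
  replace (Rabs h * Rabs h * C * / Rabs h) with (Rabs h * C) by (field; lra).
  apply Rle_lt_trans with (eps/(C+1) * C). apply Rmult_le_compat_r; lra.
  replace (eps / (C+1) * C) with (eps * (C / (C+1))) by (field; lra).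
  assert (C / (C+1) < 1) by (apply Rmult_lt_reg_r with (C+1); [lra|]; unfold Rdiv; rewrite Rmult_assoc, Rinv_l by lra; lra).
  nra.
Qed.

Lemma cplus (f g : R -> R) x : continuous f x -> continuous g x -> continuous (fun y => f y + g y) x.
Proof. intros; apply (@continuous_plus R_UniformSpace R_AbsRing R_NormedModule); auto. Qed.
Lemma cminus (f g : R -> R) x : continuous f x -> continuous g x -> continuous (fun y => f y - g y) x.
Proof. intros; apply (@continuous_minus R_UniformSpace R_AbsRing R_NormedModule); auto. Qed.

Lemma Rpow_der u a : 0 < u -> is_derive (fun x => Rpower x a) u (a * Rpower u (a-1)).
Proof. intros; apply is_derive_Reals, derivable_pt_lim_power; auto. Qed.

Lemma Rpower_small p eps : 0 < p -> 0 < eps -> exists d, 0 < d /\ forall u, 0 < u < d -> Rpower u p < eps.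
Proof.
  intros Hp He. exists (Rpower eps (/p)). split. apply Rpower_pos.
  intros u Hu. replace eps with (Rpower (Rpower eps (/p)) p).
  apply Rlt_Rpower_l; lra.
  rewrite Rpower_mult. replace (/p * p) with 1 by (field; lra). apply Rpower_1; auto.
Qed.

Lemma kk_succ2 p y u : 0 < u -> kk (p+2) y u = u^2 * kk p y u.
Proof.
  intros Hu. replace (p+2) with ((p+1)+1) by ring. rewrite kk_succ, kk_succ by auto. ring.
Qed.

Lemma ig_ext_eq (f g : R -> R) l : (forall x, f x = g x) -> is_RInt_gen f AT PI l -> is_RInt_gen g AT PI l.
Proof.
  intros He H. apply is_RInt_gen_ext with f; auto.
  apply Filter_prod with (fun _ => True) (fun _ => True).
  exists (mkposreal 1 Rlt_0_1); auto. exists 0; auto. intros; auto.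
Qed.

Lemma ig_uniq (f : R -> R) l1 l2 : is_RInt_gen f AT PI l1 -> is_RInt_gen f AT PI l2 -> l1 = l2.
Proof.
  intros H1 H2. rewrite <- (is_RInt_gen_unique f l1 H1). apply (is_RInt_gen_unique f l2 H2).
Qed.

Lemma F_rec p y : 0 < p -> Fq (p+2) y = y * Fq (p+1) y + p * Fq p y.
Proof.
  intros Hp.
  set (gg := fun u => Rpower u p * exp (y*u - u^2/2)).
  set (E := fun u => p * kk p y u + y * kk (p+1) y u - kk (p+2) y u).
  assert (Hd : forall u, 0 < u -> is_derive gg u (E u)).
  { intros u Hu. unfold gg, E. auto_derive.
    - eexists; apply Rpow_der; auto.
    - replace (Derive (fun x : R => Rpower x p) u) with (p * Rpower u (p-1)) by (symmetry; apply is_derive_unique, Rpow_der; auto).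
      rewrite kk_succ, kk_succ2 by auto. unfold kk.
      replace (Rpower u p) with (Rpower u (p-1) * u).
      2:{ replace p with ((p-1)+1) at 2 by ring. rewrite Rpower_plus, Rpower_1; auto. }
      replace (y * u + - (u * (u * 1) * / 2)) with (y * u - u ^ 2 / 2) by (simpl; field).
      simpl. field. }
  assert (HD : forall u, 0 < u -> Derive gg u = E u).
  { intros; apply is_derive_unique, Hd; auto. }
  assert (Hgg : forall u, gg u = kk (p+1) y u).
  { intros u; unfold gg, kk. replace (p+1-1) with p by ring. auto. }
  assert (HEc : forall u, 0 < u -> continuous E u).
  { intros u Hu. unfold E. apply cminus; [apply cplus|].
    apply cmult; [apply continuous_const| apply kk_cont; auto].
    apply cmult; [apply continuous_const| apply kk_cont; auto].
    apply kk_cont; auto. }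
  assert (HI : is_RInt_gen (Derive gg) AT PI (0 - 0)).
  { apply is_RInt_gen_Derive.
    - apply Filter_prod with (fun a => 0 < a) (fun b => 0 < b).
      + exists (mkposreal 1 Rlt_0_1). auto.
      + exists 0; auto.
      + intros a b Ha Hb x Hx. simpl in Hx. eexists; apply Hd.
        assert (Rmin a b > 0) by (apply Rmin_glb_lt; auto). lra.
    - apply Filter_prod with (fun a => 0 < a) (fun b => 0 < b).
      + exists (mkposreal 1 Rlt_0_1). auto.
      + exists 0; auto.
      + intros a b Ha Hb x Hx. simpl in Hx.
        assert (Hx0 : 0 < x) by (assert (Rmin a b > 0) by (apply Rmin_glb_lt; auto); lra).
        apply continuous_ext_loc with E; [|apply HEc; auto].
        exists (mkposreal x Hx0). intros v Hv. unfold ball in Hv; simpl in Hv.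
        unfold AbsRing_ball, abs, minus, plus, opp in Hv; simpl in Hv.
        apply Rabs_def2 in Hv. symmetry; apply HD; lra.
    - apply filterlim_locally. intros eps.
      assert (He : 0 < eps / exp (Rabs y)) by (apply Rdiv_lt_0_compat; [apply cond_pos|apply exp_pos]).
      destruct (Rpower_small p _ Hp He) as [d [Hd0 Hdd]].
      assert (Hm : 0 < Rmin 1 d) by (apply Rmin_pos; lra).
      exists (mkposreal _ Hm). intros u Hu Hu0. unfold ball in Hu; simpl in Hu.
      unfold AbsRing_ball, abs, minus, plus, opp in Hu; simpl in Hu.
      rewrite Ropp_0, Rplus_0_r in Hu. apply Rabs_def2 in Hu.
      pose proof (Rmin_l 1 d). pose proof (Rmin_r 1 d).
      unfold ball; simpl; unfold AbsRing_ball, abs, minus, plus, opp; simpl.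
      rewrite Ropp_0, Rplus_0_r. unfold gg.
      assert (Hb: exp (y*u - u^2/2) <= exp (Rabs y)).
      { apply exp_le'.
        assert (y*u <= Rabs y * u) by (apply Rmult_le_compat_r; [lra|apply Rle_abs]).
        assert (Rabs y * u <= Rabs y) by (pose proof (Rabs_pos y); nra). nra. }
      pose proof (Rpower_pos u p). pose proof (exp_pos (y*u - u^2/2)).
      rewrite Rabs_right by (apply Rle_ge; apply Rmult_le_pos; lra).
      assert (Rpower u p < eps / exp (Rabs y)) by (apply Hdd; lra).
      apply Rle_lt_trans with (Rpower u p * exp (Rabs y)). apply Rmult_le_compat_l; lra.
      pose proof (exp_pos (Rabs y)).
      apply Rmult_lt_reg_r with (/ exp (Rabs y)). apply Rinv_0_lt_compat; lra.
      rewrite Rmult_assoc, Rinv_r by lra. rewrite Rmult_1_r. exact H3.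
    - apply filterlim_locally. intros eps.
      set (K := Kc (p+1) y). assert (HK : 0 < K) by apply exp_pos.
      exists (Rmax 1 (K / eps)). intros u Hu.
      pose proof (Rmax_l 1 (K/eps)). pose proof (Rmax_r 1 (K/eps)).
      unfold ball; simpl; unfold AbsRing_ball, abs, minus, plus, opp; simpl.
      rewrite Ropp_0, Rplus_0_r. rewrite Hgg.
      pose proof (kk_pos (p+1) y u). rewrite Rabs_right by lra.
      pose proof (kk_bound2 (p+1) y u ltac:(lra)). fold K in H2.
      assert (exp (-u) * u < 1).
      { pose proof (exp_ineq1_le u). 
        assert (E1: exp (-u) * exp u = 1) by (rewrite <- exp_plus; replace (-u+u) with 0 by ring; apply exp_0).
        pose proof (exp_pos (-u)). nra. }
      assert (HKu : K / eps < u) by lra.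
      destruct eps as [e He]; simpl in *.
      assert (K < e * u) by (apply Rmult_lt_reg_r with (/e); [apply Rinv_0_lt_compat; lra|];
        replace (e * u * / e) with u by (field; lra); exact HKu).
      assert (K * exp (-u) < e).
      { pose proof (exp_pos (-u)). nra. }
      lra. }
  assert (HE0 : is_RInt_gen E AT PI 0).
  { assert (Z: (0:R) - 0 = 0) by ring. rewrite Z in HI. apply is_RInt_gen_ext with (Derive gg); [|exact HI].
    apply Filter_prod with (fun a => 0 < a) (fun b => 0 < b).
    + exists (mkposreal 1 Rlt_0_1). auto.
    + exists 0; auto.
    + intros a b Ha Hb x Hx. simpl in Hx. apply HD.
      assert (Rmin a b > 0) by (apply Rmin_glb_lt; auto). lra. }
  assert (HE1 : is_RInt_gen E AT PI (p * Fq p y + y * Fq (p+1) y - Fq (p+2) y)).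
  { assert (H1 := F_is p y Hp). apply (is_RInt_gen_scal _ p) in H1.
    assert (H2 := F_is (p+1) y ltac:(lra)). apply (is_RInt_gen_scal _ y) in H2.
    assert (H3 := F_is (p+2) y ltac:(lra)).
    pose proof (is_RInt_gen_plus _ _ _ _ H1 H2) as H12.
    pose proof (is_RInt_gen_minus _ _ _ _ H12 H3) as H.
    apply ig_ext_eq with (1 := fun x => eq_refl) in H. exact H. }
  pose proof (ig_uniq _ _ _ HE0 HE1). lra.
Qed.

Lemma dcont f x l : derivable_pt_lim f x l -> continuity_pt f x.
Proof. intros H. apply derivable_continuous_pt. exists l; auto. Qed.

Lemma strict_incr f d a b :
  (forall x, a < x < b -> derivable_pt_lim f x (d x)) ->
  (forall x, a <= x <= b -> continuity_pt f x) ->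
  (forall x, a <= x <= b -> 0 <= d x) ->
  (forall x, a < x < b -> 0 < d x) ->
  forall x y, a <= x -> x < y -> y <= b -> f x < f y.
Proof.
  intros Hd Hc Hd0 Hd1 x y Hx Hxy Hy.
  assert (M : forall u v, a <= u -> u < v -> v <= b -> exists c, u <= c <= v /\ f v - f u = d c * (v - u)).
  { intros u v Hu Huv Hv. destruct (MVT_gen f u v d) as [c [Hc1 Hc2]].
    - intros z Hz. rewrite Rmin_left, Rmax_right in Hz by lra. apply is_derive_Reals, Hd. lra.
    - intros z Hz. rewrite Rmin_left, Rmax_right in Hz by lra. apply Hc. lra.
    - rewrite Rmin_left, Rmax_right in Hc1 by lra. exists c; auto. }
  set (z1 := x + (y-x)/3). set (z2 := x + 2*(y-x)/3).
  destruct (M x z1) as [c1 [Hc1 E1]]; try (unfold z1; lra).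
  destruct (M z1 z2) as [c2 [Hc2 E2]]; try (unfold z1, z2; lra).
  destruct (M z2 y) as [c3 [Hc3 E3]]; try (unfold z2; lra).
  assert (0 <= d c1) by (apply Hd0; unfold z1 in *; lra).
  assert (0 < d c2) by (apply Hd1; unfold z1, z2 in *; lra).
  assert (0 <= d c3) by (apply Hd0; unfold z2 in *; lra).
  assert (0 <= d c1 * (z1 - x)) by (apply Rmult_le_pos; unfold z1; lra).
  assert (0 < d c2 * (z2 - z1)) by (apply Rmult_lt_0_compat; unfold z1, z2; lra).
  assert (0 <= d c3 * (y - z2)) by (apply Rmult_le_pos; unfold z2; lra).
  lra.
Qed.

Lemma strict_decr f d a b :
  (forall x, a < x < b -> derivable_pt_lim f x (d x)) ->
  (forall x, a <= x <= b -> continuity_pt f x) ->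
  (forall x, a <= x <= b -> d x <= 0) ->
  (forall x, a < x < b -> d x < 0) ->
  forall x y, a <= x -> x < y -> y <= b -> f y < f x.
Proof.
  intros Hd Hc Hd0 Hd1 x y Hx Hxy Hy.
  assert (H := strict_incr (fun t => - f t) (fun t => - d t) a b).
  assert (- f x < - f y); [|lra].
  apply H; auto.
  - intros; apply derivable_pt_lim_opp; auto.
  - intros; apply continuity_pt_opp; auto.
  - intros; specialize (Hd0 x0 H0); lra.
  - intros; specialize (Hd1 x0 H0); lra.
Qed.

Lemma ar_contra (P Q : R -> Prop) : at_right 0 P -> at_right 0 Q -> (forall z, P z -> Q z -> False) -> False.
Proof.
  intros HP HQ H. assert (PF := at_right_proper_filter 0).
  destruct (filter_ex _ (filter_and _ _ HP HQ)) as [z [A B]]. eauto.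
Qed.

Lemma fl_app (g : R -> R) l (P : R -> Prop) : filterlim g (at_right 0) (Rbar_locally l) -> Rbar_locally l P -> at_right 0 (fun h => P (g h)).
Proof. intros H HP; exact (H P HP). Qed.

Lemma rderiv_unique f x l1 l2 : is_rderiv f x l1 -> is_rderiv f x l2 -> l1 = l2.
Proof.
  unfold is_rderiv. intros H1 H2.
  set (g := fun h => (f (x + h) - f x) / h) in *.
  assert (PF := at_right_proper_filter 0).
  destruct l1 as [r1| |]; destruct l2 as [r2| |]; auto.
  - f_equal. apply (filterlim_locally_unique g r1 r2 H1 H2).
  - exfalso. apply (ar_contra _ _ (fl_app _ _ (fun y => y < r1 + 1) H1 ltac:(apply (locally_interval _ _ m_infty (r1+1)); simpl; auto; lra))
      (fl_app _ _ (fun y => r1 + 1 < y) H2 ltac:(exists (r1+1); auto))); simpl; intros; lra.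
  - exfalso. apply (ar_contra _ _ (fl_app _ _ (fun y => r1 - 1 < y) H1 ltac:(apply (locally_interval _ _ (r1-1) p_infty); simpl; auto; lra))
      (fl_app _ _ (fun y => y < r1 - 1) H2 ltac:(exists (r1-1); auto))); simpl; intros; lra.
  - exfalso. apply (ar_contra _ _ (fl_app _ _ (fun y => y < r2 + 1) H2 ltac:(apply (locally_interval _ _ m_infty (r2+1)); simpl; auto; lra))
      (fl_app _ _ (fun y => r2 + 1 < y) H1 ltac:(exists (r2+1); auto))); simpl; intros; lra.
  - exfalso. apply (ar_contra _ _ (fl_app _ _ (fun y => 0 < y) H1 ltac:(exists 0; auto))
      (fl_app _ _ (fun y => y < 0) H2 ltac:(exists 0; auto))); simpl; intros; lra.
  - exfalso. apply (ar_contra _ _ (fl_app _ _ (fun y => r2 - 1 < y) H2 ltac:(apply (locally_interval _ _ (r2-1) p_infty); simpl; auto; lra))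
      (fl_app _ _ (fun y => y < r2 - 1) H1 ltac:(exists (r2-1); auto))); simpl; intros; lra.
  - exfalso. apply (ar_contra _ _ (fl_app _ _ (fun y => 0 < y) H2 ltac:(exists 0; auto))
      (fl_app _ _ (fun y => y < 0) H1 ltac:(exists 0; auto))); simpl; intros; lra.
Qed.

Lemma deriv_rderiv f x d : derivable_pt_lim f x d -> is_rderiv f x (Finite d).
Proof.
  intros H. unfold is_rderiv. simpl. apply filterlim_locally. intros eps.
  destruct (H eps (cond_pos eps)) as [del Hdel].
  exists del. intros h Hh Hh0. unfold ball in Hh; simpl in Hh.
  unfold AbsRing_ball, abs, minus, plus, opp in Hh; simpl in Hh.
  rewrite Ropp_0, Rplus_0_r in Hh.
  unfold ball; simpl; unfold AbsRing_ball, abs, minus, plus, opp; simpl.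
  rewrite <- Rabs_Ropp. replace (- ((f (x + h) - f x) / h + - d)) with (-((f (x + h) - f x) / h - d)) by ring.
  rewrite Rabs_Ropp. apply Hdel; auto. lra.
Qed.

Lemma dF p y : 0 < p -> is_derive (Fq p) y (Fq (p+1) y).
Proof. intros; apply is_derive_Reals, F_deriv; auto. Qed.

Lemma DF p y : 0 < p -> Derive (Fq p) y = Fq (p+1) y.
Proof. intros; apply is_derive_unique, dF; auto. Qed.

Lemma powq_pos_eq a x : 0 < x -> powq x a = Rpower x a.
Proof. intros; unfold powq; destruct (Rlt_dec 0 x); [auto|lra]. Qed.

Lemma dpowq a A : 0 < A -> is_derive (fun x => powq x a) A (a * powq A (a-1)).
Proof.
  intros HA. rewrite powq_pos_eq by auto.
  apply is_derive_ext_loc with (fun x => Rpower x a).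
  - exists (mkposreal A HA). intros t Ht. unfold ball in Ht; simpl in Ht.
    unfold AbsRing_ball, abs, minus, plus, opp in Ht; simpl in Ht. apply Rabs_def2 in Ht.
    rewrite powq_pos_eq; auto; lra.
  - apply Rpow_der; auto.
Qed.

Lemma Dpowq a A : 0 < A -> Derive (fun x => powq x a) A = a * powq A (a-1).
Proof. intros; apply is_derive_unique, dpowq; auto. Qed.

Definition cc q Ds := powq Ds q / FGq q Ds.
Definition Wr q A := Fq (q+1) A * Fq q (-A) + Fq q A * Fq (q+1) (-A).
Definition NN q Ds A := cc q Ds * Wr q A - q * powq A (q-1) * Fq q (-A) - powq A q * Fq (q+1) (-A).

Lemma w_deriv q Ds A : 0 < q -> 0 < A -> is_derive (wfun q Ds) A (NN q Ds A / (Fq q (-A))^2).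
Proof.
  intros Hq HA. unfold wfun, FGq, Gq.
  assert (HG : 0 < Fq q (-A)) by (apply F_pos; auto).
  auto_derive.
  - split; [eexists; apply dF; auto|]. split; [lra|]. split; [eexists; apply dF; auto|].
    split; [eexists; apply dF; auto|]. split; [eexists; apply dpowq; auto| auto].
  - rewrite !DF, Dpowq by auto.
    assert (0 < Fq q Ds + Fq q (-Ds)) by (pose proof (F_pos q Ds Hq); pose proof (F_pos q (-Ds) Hq); lra).
    unfold NN, Wr, cc, FGq, Gq. field. lra.
Qed.

Definition psi q Ds A := exp (-(A^2)/2) * NN q Ds A.

Lemma Rpower_s1 A a : 0 < A -> Rpower A (a+1) = A * Rpower A a.
Proof. intros; rewrite Rpower_plus, Rpower_1; auto; ring. Qed.

Lemma psi_deriv q Ds A : 0 < q -> 0 < A ->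
  is_derive (psi q Ds) A (- q * Fq q (-A) * Rpower A (q-2) * (q - 1 - 2*A^2) * exp (-(A^2)/2)).
Proof.
  intros Hq HA. unfold psi, NN, Wr.
  auto_derive.
  - repeat match goal with |- _ /\ _ => split end;
    match goal with
    | |- ex_derive (fun x => Fq _ x) _ => eexists; apply dF; lra
    | |- ex_derive (fun x => powq x _) _ => eexists; apply dpowq; lra
    | |- True => auto
    end.
  - rewrite !DF, !Dpowq by lra.
    replace (q+1+1) with (q+2) by ring.
    rewrite !F_rec by lra.
    rewrite !powq_pos_eq by auto.
    replace (q - 1 - 1) with (q - 2) by ring.
    replace (Rpower A q) with (A * (A * Rpower A (q-2))) by (rewrite <- !Rpower_s1; auto; f_equal; ring).
    replace (Rpower A (q-1)) with (A * Rpower A (q-2)) by (rewrite <- !Rpower_s1; auto; f_equal; ring).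
    match goal with |- ?a = ?b => change (@eq R a b) end.
    set (e := exp (-(A^2)/2)).
    replace (exp (- (A * (A * 1)) * / 2)) with e by (unfold e; f_equal; field).
    field.
Qed.

Lemma FG_pos q y : 0 < q -> 0 < FGq q y.
Proof. intros; unfold FGq, Gq; pose proof (F_pos q y H); pose proof (F_pos q (-y) H); lra. Qed.

Lemma DFG q y : 0 < q -> Derive (FGq q) y = Fq (q+1) y - Fq (q+1) (-y).
Proof.
  intros Hq. apply is_derive_unique. unfold FGq, Gq. auto_derive.
  - split; [eexists; apply dF; lra|]. split; [eexists; apply dF; lra| auto].
  - rewrite !DF by lra. ring.
Qed.

Lemma NN_Ds q Ds : 0 < q -> 0 < Ds -> Dstar_eq q Ds -> NN q Ds Ds = 0.
Proof.
  intros Hq HD He. unfold Dstar_eq in He. rewrite DFG in He by auto.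
  pose proof (FG_pos q Ds Hq) as HH.
  unfold NN, cc, Wr. unfold FGq, Gq in *.
  rewrite !powq_pos_eq by auto.
  replace (Rpower Ds q) with (Ds * Rpower Ds (q-1)) by (rewrite <- Rpower_s1; auto; f_equal; ring).
  assert (Hq' : q = Ds * (Fq (q + 1) Ds - Fq (q + 1) (- Ds)) / (Fq q Ds + Fq q (- Ds))) by lra.
  replace (q * Rpower Ds (q - 1) * Fq q (- Ds)) with (Ds * (Fq (q + 1) Ds - Fq (q + 1) (- Ds)) / (Fq q Ds + Fq q (- Ds)) * Rpower Ds (q - 1) * Fq q (- Ds)) by (rewrite <- Hq'; auto).
  field. lra.
Qed.

Lemma cp_of_c f x : continuous f x -> continuity_pt f x.
Proof. intros H; apply continuity_pt_filterlim; exact H. Qed.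
Lemma c_of_cp f x : continuity_pt f x -> continuous f x.
Proof. intros H; apply continuity_pt_filterlim; exact H. Qed.

Lemma dG p y : 0 < p -> is_derive (fun x => Fq p (-x)) y (- Fq (p+1) (-y)).
Proof.
  intros Hp. auto_derive. eexists; apply dF; auto. rewrite DF by auto. ring.
Qed.

Lemma cF p y : 0 < p -> continuous (Fq p) y.
Proof. intros; apply (@ex_derive_continuous R_AbsRing R_NormedModule); eexists; apply dF; auto. Qed.
Lemma cG p y : 0 < p -> continuous (fun x => Fq p (-x)) y.
Proof. intros; apply (@ex_derive_continuous R_AbsRing R_NormedModule); eexists; apply dG; auto. Qed.

Lemma powq_nonneg x a : 0 <= powq x a.
Proof. unfold powq; destruct (Rlt_dec 0 x); [left; apply Rpower_pos| lra]. Qed.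

Lemma powq_0 a : powq 0 a = 0.
Proof. unfold powq; destruct (Rlt_dec 0 0); [lra|auto]. Qed.

Lemma powq_cont0 a : 0 < a -> continuous (fun x => powq x a) 0.
Proof.
  intros Ha. apply c_of_cp. intros eps Heps.
  destruct (Rpower_small a eps Ha Heps) as [d [Hd Hdd]].
  exists d. split; auto. intros x [_ Hx]. simpl in *. unfold R_dist in *.
  rewrite powq_0, Rminus_0_r. rewrite Rminus_0_r in Hx.
  unfold powq; destruct (Rlt_dec 0 x).
  - rewrite Rabs_right by (left; apply Rpower_pos). apply Hdd. apply Rabs_def2 in Hx. lra.
  - rewrite Rabs_R0; auto.
Qed.

Lemma powq_cont a x : 0 < a -> 0 <= x -> continuous (fun x => powq x a) x.
Proof.
  intros Ha [Hx|Hx]. apply (@ex_derive_continuous R_AbsRing R_NormedModule); eexists; apply dpowq; auto.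
  subst; apply powq_cont0; auto.
Qed.

Lemma w_cont q Ds x : 0 < q -> 0 <= x -> continuous (wfun q Ds) x.
Proof.
  intros Hq Hx. unfold wfun, FGq, Gq.
  apply cmult. apply continuous_Rinv_comp. apply (cG q); auto. pose proof (F_pos q (-x) Hq); lra.
  apply cminus; [|apply powq_cont; auto].
  apply cmult; [|apply continuous_const].
  apply cmult; [apply continuous_const|]. apply cplus; [apply (cF q)|apply (cG q)]; auto.
Qed.

Lemma psi_cont q Ds x : 1 < q -> 0 <= x -> continuous (psi q Ds) x.
Proof.
  intros Hq Hx. unfold psi, NN, Wr.
  apply cmult. apply continuous_exp_comp. apply (@ex_derive_continuous R_AbsRing R_NormedModule). auto_derive. auto.
  apply cminus; [apply cminus|].
  - apply cmult; [apply continuous_const|]. apply cplus; apply cmult.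
    apply (cF (q+1)); lra. apply (cG q); lra. apply (cF q); lra. apply (cG (q+1)); lra.
  - apply cmult; [apply cmult; [apply continuous_const| apply powq_cont; lra]| apply (cG q); lra].
  - apply cmult; [apply powq_cont; lra| apply (cG (q+1)); lra].
Qed.

Definition psid q A := - q * Fq q (-A) * Rpower A (q-2) * (q - 1 - 2*A^2) * exp (-(A^2)/2).

Lemma dpsi q Ds A : 0 < q -> 0 < A -> derivable_pt_lim (psi q Ds) A (psid q A).
Proof. intros; apply is_derive_Reals, psi_deriv; auto. Qed.

Lemma psid_sign q A : 0 < q -> 0 < A -> exists K, 0 < K /\ psid q A = K * (2*A^2 - (q-1)).
Proof.
  intros Hq HA. exists (q * Fq q (-A) * Rpower A (q-2) * exp (-(A^2)/2)). split.
  - repeat apply Rmult_lt_0_compat; auto. apply F_pos; auto. apply Rpower_pos. apply exp_pos.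
  - unfold psid. ring.
Qed.

Lemma psi_sign q Ds A : (0 < psi q Ds A <-> 0 < NN q Ds A) /\ (psi q Ds A < 0 <-> NN q Ds A < 0)
  /\ (psi q Ds A = 0 <-> NN q Ds A = 0).
Proof.
  unfold psi. pose proof (exp_pos (-(A^2)/2)) as He. set (e := exp (-(A^2)/2)) in *.
  split; [|split]; split; intros H.
  - apply (Rmult_lt_reg_l e); lra.
  - apply Rmult_lt_0_compat; auto.
  - apply (Rmult_lt_reg_l e); lra.
  - nra.
  - apply Rmult_integral in H. destruct H; lra.
  - rewrite H; ring.
Qed.

Lemma cc_pos q Ds : 0 < q -> 0 < Ds -> 0 < cc q Ds.
Proof.
  intros. unfold cc. rewrite powq_pos_eq by auto. apply Rdiv_lt_0_compat. apply Rpower_pos. apply FG_pos; auto.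
Qed.

Lemma Wr_pos q A : 0 < q -> 0 < Wr q A.
Proof.
  intros. unfold Wr. pose proof (F_pos (q+1) A ltac:(lra)). pose proof (F_pos q (-A) H).
  pose proof (F_pos q A H). pose proof (F_pos (q+1) (-A) ltac:(lra)). nra.
Qed.

Lemma psi_cpos q Ds x : 0 < q -> 0 < x -> continuity_pt (psi q Ds) x.
Proof. intros; eapply dcont, dpsi; eauto. Qed.

Definition psi1 q Ds A := exp (-(A^2)/2) * (cc q Ds * Wr q A - Fq q (-A) - A * Fq (q+1) (-A)).

Lemma dpsi1 Ds A : derivable_pt_lim (psi1 1 Ds) A (2 * Fq 1 (-A) * A * exp (-(A^2)/2)).
Proof.
  apply is_derive_Reals. unfold psi1, Wr. auto_derive.
  - repeat match goal with |- _ /\ _ => split end;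
    match goal with
    | |- ex_derive (fun x => Fq _ x) _ => eexists; apply dF; lra
    | |- True => auto
    end.
  - rewrite !DF by lra. replace (1+1+1) with (1+2) by ring. replace (1+1) with (1+1) by ring.
    rewrite !F_rec by lra.
    match goal with |- ?a = ?b => change (@eq R a b) end.
    set (e := exp (-(A^2)/2)).
    replace (exp (- (A * (A * 1)) * / 2)) with e by (unfold e; f_equal; field).
    field.
Qed.

Lemma psi0 q Ds : 1 < q -> psi q Ds 0 = cc q Ds * Wr q 0.
Proof.
  intros. unfold psi, NN. rewrite !powq_0. replace (-(0^2)/2) with 0 by (simpl; field). rewrite exp_0. ring.
Qed.

Lemma profile q Ds : 0 < q -> 0 < Ds -> NN q Ds Ds = 0 ->
  exists As, 0 <= As <= Ds /\
    (forall A, 0 < A < As -> 0 < NN q Ds A) /\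
    (forall A, As < A < Ds -> NN q Ds A < 0) /\
    (0 < As -> NN q Ds As = 0) /\
    As <= sqrt (Rmax ((q-1)/2) 0) /\
    (As = 0 <-> q <= 1).
Proof.
  intros Hq HD HN.
  assert (HpD : psi q Ds Ds = 0) by (apply psi_sign; auto).
  destruct (Rle_dec q 1) as [Hq1|Hq1].
  - exists 0. split; [lra|]. split; [intros; lra|]. split.
    + intros A HA. apply psi_sign. rewrite <- HpD.
      apply (strict_incr (psi q Ds) (psid q) A Ds); try lra.
      * intros; apply dpsi; lra.
      * intros; apply psi_cpos; lra.
      * intros x Hx. destruct (psid_sign q x Hq ltac:(lra)) as [K [HK ->]].
        assert (0 <= 2*x^2) by nra. nra.
      * intros x Hx. destruct (psid_sign q x Hq ltac:(lra)) as [K [HK ->]].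
        assert (0 < 2*x^2) by nra. nra.
    + split; [intros; lra|]. split.
      * apply sqrt_pos.
      * split; intros; lra.
  - assert (Hq1' : 1 < q) by lra.
    set (m := sqrt ((q-1)/2)).
    assert (Hm0 : 0 < m) by (apply sqrt_lt_R0; lra).
    assert (Hm2 : m^2 = (q-1)/2) by (unfold m; simpl; rewrite Rmult_1_r; apply sqrt_sqrt; lra).
    assert (Hmax : Rmax ((q-1)/2) 0 = (q-1)/2) by (apply Rmax_left; lra).
    rewrite Hmax. fold m.
    assert (Hp0 : 0 < psi q Ds 0) by (rewrite psi0; auto; apply Rmult_lt_0_compat; [apply cc_pos|apply Wr_pos]; lra).
    set (d := fun x => if Rlt_dec 0 x then psid q x else 0).
    assert (Hdec : forall b, b <= m -> forall x y, 0 <= x -> x < y -> y <= b -> psi q Ds y < psi q Ds x).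
    { intros b Hb. apply (strict_decr (psi q Ds) d 0 b).
      - intros x Hx. unfold d. destruct (Rlt_dec 0 x); [|lra]. apply dpsi; lra.
      - intros x Hx. apply cp_of_c, psi_cont; lra.
      - intros x Hx. unfold d. destruct (Rlt_dec 0 x); [|lra].
        destruct (psid_sign q x Hq ltac:(lra)) as [K [HK ->]].
        assert (x^2 <= m^2) by nra. nra.
      - intros x Hx. unfold d. destruct (Rlt_dec 0 x); [|lra].
        destruct (psid_sign q x Hq ltac:(lra)) as [K [HK ->]].
        assert (x^2 < m^2) by nra. nra. }
    destruct (Rle_dec Ds m) as [HDm|HDm].
    + exists Ds. split; [lra|]. split.
      * intros A HA. apply psi_sign. rewrite <- HpD. apply (Hdec Ds); lra.
      * split; [intros; lra|]. split; [auto|]. split; [auto|]. split; intros; lra.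
    + assert (Hinc : forall x y, m <= x -> x < y -> y <= Ds -> psi q Ds x < psi q Ds y).
      { apply (strict_incr (psi q Ds) (psid q) m Ds).
        - intros; apply dpsi; lra.
        - intros; apply psi_cpos; lra.
        - intros x Hx. destruct (psid_sign q x Hq ltac:(lra)) as [K [HK ->]].
          assert (m^2 <= x^2) by nra. nra.
        - intros x Hx. destruct (psid_sign q x Hq ltac:(lra)) as [K [HK ->]].
          assert (m^2 < x^2) by nra. nra. }
      assert (Hpm : psi q Ds m < 0) by (rewrite <- HpD; apply Hinc; lra).
      destruct (Ranalysis5.IVT_interv (fun x => - psi q Ds x) 0 m) as [As [HAs HAs0]].
      { intros a Ha. apply continuity_pt_opp. apply cp_of_c, psi_cont; lra. }
      { lra. } { lra. } { lra. }
      assert (HAs' : psi q Ds As = 0) by lra.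
      assert (As <> 0) by (intro; subst; lra).
      assert (As <> m) by (intro; subst; lra).
      exists As. split; [lra|]. split.
      * intros A HA. apply psi_sign. rewrite <- HAs'. apply (Hdec m); lra.
      * split.
        { intros A HA. apply psi_sign. destruct (Rle_dec A m).
          - rewrite <- HAs'. apply (Hdec m); lra.
          - rewrite <- HpD. apply Hinc; lra. }
        split; [intros; apply psi_sign; auto|]. split; [lra|]. split; intros; lra.
Qed.

Lemma gen_w_deriv q Ds (P : R -> R) x dP : 0 < q -> is_derive P x dP ->
  is_derive (fun A => / Fq q (-A) * (powq Ds q * FGq q A / FGq q Ds - P A)) x
   ((cc q Ds * Wr q x - dP * Fq q (-x) - P x * Fq (q+1) (-x)) / (Fq q (-x))^2).
Proof.
  intros Hq HP. unfold FGq, Gq.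
  assert (HG : 0 < Fq q (-x)) by (apply F_pos; auto).
  auto_derive.
  - split; [eexists; apply dF; auto|]. split; [lra|]. split; [eexists; apply dF; auto|].
    split; [eexists; apply dF; auto|]. split; [eexists; eauto| auto].
  - rewrite !DF by auto. replace (Derive (fun y => P y) x) with dP by (symmetry; apply is_derive_unique; auto).
    assert (0 < Fq q Ds + Fq q (-Ds)) by (pose proof (F_pos q Ds Hq); pose proof (F_pos q (-Ds) Hq); lra).
    unfold Wr, cc, FGq, Gq. field. lra.
Qed.

Lemma powq_d0 a : 1 < a -> is_derive (fun x => powq x a) 0 0.
Proof.
  intros Ha. apply is_derive_Reals. intros eps Heps.
  destruct (Rpower_small (a-1) eps ltac:(lra) Heps) as [d [Hd Hdd]].
  exists (mkposreal d Hd). intros h Hh0 Hh. simpl in Hh.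
  rewrite Rplus_0_l, powq_0, Rminus_0_r, Rminus_0_r.
  unfold powq. destruct (Rlt_dec 0 h).
  - replace (Rpower h a) with (h * Rpower h (a-1)) by (rewrite <- Rpower_s1; auto; f_equal; ring).
    replace (h * Rpower h (a-1) / h) with (Rpower h (a-1)) by (field; lra).
    rewrite Rabs_right by (left; apply Rpower_pos). apply Hdd. apply Rabs_def2 in Hh. lra.
  - unfold Rdiv. rewrite Rmult_0_l, Rabs_R0. auto.
Qed.

Lemma q1_neg Ds : 0 < Ds -> NN 1 Ds Ds = 0 -> cc 1 Ds * Wr 1 0 - Fq 1 (-0) < 0.
Proof.
  intros HD HN.
  assert (H1 : psi1 1 Ds Ds = 0).
  { unfold psi1. unfold NN in HN. rewrite !powq_pos_eq in HN by auto.
    replace (1-1) with 0 in HN by ring. rewrite Rpower_O, Rpower_1 in HN by auto.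
    replace (cc 1 Ds * Wr 1 Ds - Fq 1 (- Ds) - Ds * Fq (1 + 1) (- Ds)) with 0 by lra. ring. }
  assert (H0 : psi1 1 Ds 0 < psi1 1 Ds Ds).
  { apply (strict_incr (psi1 1 Ds) (fun A => 2 * Fq 1 (-A) * A * exp (-(A^2)/2)) 0 Ds); try lra.
    - intros; apply dpsi1.
    - intros; eapply dcont, dpsi1.
    - intros x Hx. pose proof (F_pos 1 (-x) Rlt_0_1). pose proof (exp_pos (-(x^2)/2)).
      apply Rmult_le_pos; [|lra]. apply Rmult_le_pos; lra.
    - intros x Hx. pose proof (F_pos 1 (-x) Rlt_0_1). pose proof (exp_pos (-(x^2)/2)).
      apply Rmult_lt_0_compat; [|lra]. apply Rmult_lt_0_compat; lra. }
  rewrite H1 in H0. unfold psi1 in H0.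
  replace (-(0^2)/2) with 0 in H0 by (simpl; field). rewrite exp_0 in H0. lra.
Qed.

Lemma ar_intro (P : R -> Prop) d : 0 < d -> (forall h, 0 < h < d -> P h) -> at_right 0 P.
Proof.
  intros Hd H. exists (mkposreal d Hd). intros y Hy Hy0. unfold ball in Hy; simpl in Hy.
  unfold AbsRing_ball, abs, minus, plus, opp in Hy; simpl in Hy.
  rewrite Ropp_0, Rplus_0_r in Hy. apply Rabs_def2 in Hy. apply H; lra.
Qed.

Lemma rd0 q Ds : 0 < q -> 0 < Ds -> NN q Ds Ds = 0 ->
  exists l, is_rderiv (wfun q Ds) 0 l /\ (1 < q -> Rbar_lt 0 l) /\ (q <= 1 -> Rbar_lt l 0).
Proof.
  intros Hq HD HN.
  assert (HG0 : 0 < Fq q (-0)) by (apply F_pos; auto).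
  destruct (Rlt_dec 1 q) as [Hq1|Hq1].
  - pose proof (gen_w_deriv q Ds (fun x => powq x q) 0 0 Hq (powq_d0 q Hq1)) as H.
    eexists. split. apply deriv_rderiv. apply is_derive_Reals. exact H.
    split; [|intros; lra]. intros _. simpl. rewrite powq_0.
    apply Rdiv_lt_0_compat; [|nra].
    pose proof (cc_pos q Ds Hq HD). pose proof (Wr_pos q 0 Hq). nra.
  - destruct (Req_dec q 1) as [E|Hq2].
    + subst q.
      assert (HI : is_derive (fun x : R => x) 0 1) by (auto_derive; auto).
      pose proof (gen_w_deriv 1 Ds (fun x => x) 0 1 Hq HI) as H.
      apply is_derive_Reals, deriv_rderiv in H.
      exists (Finite ((cc 1 Ds * Wr 1 0 - 1 * Fq 1 (-0) - 0 * Fq (1+1) (-0)) / Fq 1 (-0)^2)).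
      split. 2:{ split; [intros; lra|]. intros _. simpl.
        pose proof (q1_neg Ds HD HN).
        apply Rmult_lt_reg_r with (Fq 1 (-0) * (Fq 1 (-0) * 1)). nra.
        unfold Rdiv. rewrite Rmult_assoc, Rinv_l, Rmult_0_l. nra. nra. }
      unfold is_rderiv in *. eapply filterlim_ext_loc; [|exact H].
      apply ar_intro with 1; [lra|]. intros h Hh. unfold wfun, Gq.
      rewrite !Rplus_0_l, !powq_0. rewrite (powq_pos_eq 1 h), Rpower_1 by lra. reflexivity.
    + assert (Hq3 : q < 1) by lra.
      assert (HI : is_derive (fun _ : R => 0) 0 0) by (auto_derive; auto).
      pose proof (gen_w_deriv q Ds (fun _ => 0) 0 0 Hq HI) as H.
      apply is_derive_Reals, deriv_rderiv in H. unfold is_rderiv in H.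
      set (L0 := (cc q Ds * Wr q 0 - 0 * Fq q (- 0) - 0 * Fq (q + 1) (- 0)) / Fq q (- 0) ^ 2) in H.
      set (v := fun A : R => / Fq q (- A) * (powq Ds q * FGq q A / FGq q Ds - 0)) in H.
      exists m_infty. split; [|split; [intros; lra| intros; simpl; auto]].
      unfold is_rderiv. intros P [M HM].
      assert (H1 := proj1 (filterlim_locally _ _) H (mkposreal 1 Rlt_0_1)).
      destruct H1 as [d1 Hd1].
      assert (HGc := proj1 (filterlim_locally _ _) (cG q 0 Hq) (mkposreal _ HG0)).
      destruct HGc as [d2 Hd2].
      set (K := Rmax 1 (2 * Fq q (-0) * (L0 + 1 - M))).
      assert (HK : 0 < K) by (unfold K; pose proof (Rmax_l 1 (2 * Fq q (-0) * (L0 + 1 - M))); lra).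
      destruct (Rpower_small (1-q) (/K) ltac:(lra) ltac:(apply Rinv_0_lt_compat; auto)) as [d3 [Hd3 Hd3']].
      apply ar_intro with (Rmin d1 (Rmin d2 d3)).
      { apply Rmin_pos; [apply cond_pos| apply Rmin_pos; [apply cond_pos| auto]]. }
      intros h Hh. apply HM.
      pose proof (Rmin_l d1 (Rmin d2 d3)). pose proof (Rmin_r d1 (Rmin d2 d3)).
      pose proof (Rmin_l d2 d3). pose proof (Rmin_r d2 d3).
      assert (Hball : forall e : posreal, e >= Rmin d1 (Rmin d2 d3) -> ball 0 e h).
      { intros e He. unfold ball; simpl; unfold AbsRing_ball, abs, minus, plus, opp; simpl.
        rewrite Ropp_0, Rplus_0_r, Rabs_right by lra. lra. }
      specialize (Hd1 h (Hball d1 ltac:(lra)) ltac:(lra)).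
      specialize (Hd2 h (Hball d2 ltac:(lra))).
      unfold ball in Hd1, Hd2; simpl in Hd1, Hd2; unfold AbsRing_ball, abs, minus, plus, opp in Hd1, Hd2; simpl in Hd1, Hd2.
      apply Rabs_def2 in Hd1. apply Rabs_def2 in Hd2.
      assert (Hr : Rpower h (1-q) < / K) by (apply Hd3'; lra).
      assert (HRp : K < Rpower h (q-1)).
      { replace (q-1) with (-(1-q)) by ring. rewrite Rpower_Ropp.
        pose proof (Rpower_pos h (1-q)).
        apply Rmult_lt_reg_r with (Rpower h (1-q)); auto. rewrite Rinv_l by lra.
        apply Rmult_lt_reg_l with (/K). apply Rinv_0_lt_compat; auto.
        rewrite <- Rmult_assoc, Rinv_l by lra. lra. }
      assert (HGh : 0 < Fq q (-h)) by (apply F_pos; auto).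
      assert (E : (wfun q Ds (0 + h) - wfun q Ds 0) / h =
                  (v (0 + h) - v 0) / h - Rpower h (q-1) * / Fq q (- h)).
      { unfold wfun, v, Gq. rewrite !Rplus_0_l, !powq_0.
        rewrite (powq_pos_eq q h) by lra.
        assert (Eh : Rpower h q = h * Rpower h (q-1)) by (rewrite <- Rpower_s1 by lra; f_equal; ring).
        rewrite Eh. pose proof (FG_pos q Ds Hq).
        field. repeat split; lra. }
      rewrite E.
      assert (Hx : K / (2 * Fq q (-0)) < Rpower h (q-1) * / Fq q (-h)).
      { apply Rlt_le_trans with (Rpower h (q-1) / (2 * Fq q (-0))).
        - apply Rmult_lt_compat_r; auto. apply Rinv_0_lt_compat; lra.
        - unfold Rdiv. apply Rmult_le_compat_l. left; apply Rpower_pos.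
          apply Rinv_le_contravar; [auto| lra]. }
      assert (L0 + 1 - M <= K / (2 * Fq q (-0))).
      { apply Rmult_le_reg_r with (2 * Fq q (-0)). lra.
        unfold Rdiv. rewrite Rmult_assoc, Rinv_l, Rmult_1_r by lra.
        unfold K. rewrite Rmult_comm. apply Rmax_r. }
      unfold v in *. cbv beta in *.
      replace (- (0 + h)) with (- h) in * by ring.
      lra.
Qed.

Theorem lemma5p2 (q Ds : R) (hq : 0 < q)
  (hDs : 0 < Ds) (hDeq : Dstar_eq q Ds)
  (hDuniq : forall D, 0 < D -> Dstar_eq q D -> D = Ds) :
  exists As : R,
    (0 <= As <= Ds /\
     (forall A, 0 <= A <= Ds -> wfun q Ds A <= wfun q Ds As)) /\
    (forall B, 0 <= B <= Ds ->
       (forall A, 0 <= A <= Ds -> wfun q Ds A <= wfun q Ds B) -> B = As) /\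
    As <= sqrt (Rmax ((q - 1) / 2) 0) /\
    (forall A, 0 <= A <= Ds -> exists l : Rbar, is_rderiv (wfun q Ds) A l) /\
    (forall A (l : Rbar), 0 <= A <= Ds -> is_rderiv (wfun q Ds) A l ->
       (Rbar_le l 0 <-> As <= A)) /\
    (As = 0 <-> q <= 1).
Proof.
  pose proof (NN_Ds q Ds hq hDs hDeq) as HN.
  destruct (profile q Ds hq hDs HN) as [As [HAsr [P1 [P2 [P3 [P4 P5]]]]]].
  destruct (rd0 q Ds hq hDs HN) as [l0 [Hl0 [Hl0a Hl0b]]].
  assert (Wd : forall A, 0 < A -> derivable_pt_lim (wfun q Ds) A (NN q Ds A / (Fq q (-A))^2)).
  { intros A HA. apply is_derive_Reals, w_deriv; auto. }
  assert (Gp : forall A, 0 < (Fq q (-A))^2).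
  { intros A. apply pow_lt. apply F_pos; auto. }
  assert (Sg : forall A, (0 < NN q Ds A / (Fq q (-A))^2 <-> 0 < NN q Ds A) /\
                         (NN q Ds A / (Fq q (-A))^2 <= 0 <-> NN q Ds A <= 0)).
  { intros A. specialize (Gp A). split; split; intros H.
    - apply (Rmult_lt_reg_r (/ (Fq q (-A))^2)). apply Rinv_0_lt_compat; auto. rewrite Rmult_0_l. exact H.
    - apply Rdiv_lt_0_compat; auto.
    - destruct (Rle_dec (NN q Ds A) 0); auto. exfalso.
      assert (0 < NN q Ds A / Fq q (- A) ^ 2) by (apply Rdiv_lt_0_compat; lra). lra.
    - unfold Rdiv. assert (0 < / Fq q (-A) ^ 2) by (apply Rinv_0_lt_compat; auto). nra. }
  set (d := fun x => if Rlt_dec 0 x then NN q Ds x / (Fq q (-x))^2 else 0).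
  assert (Cw : forall x, 0 <= x -> continuity_pt (wfun q Ds) x).
  { intros x Hx. apply cp_of_c, w_cont; auto. }
  assert (Inc : forall x y, 0 <= x -> x < y -> y <= As -> wfun q Ds x < wfun q Ds y).
  { apply (strict_incr (wfun q Ds) d 0 As).
    - intros x Hx. unfold d. destruct (Rlt_dec 0 x); [|lra]. apply Wd; lra.
    - intros; apply Cw; lra.
    - intros x Hx. unfold d. destruct (Rlt_dec 0 x); [|lra].
      destruct (Req_dec x As) as [->|Hne].
      + rewrite P3 by lra. unfold Rdiv; rewrite Rmult_0_l; lra.
      + left; apply Sg, P1; lra.
    - intros x Hx. unfold d. destruct (Rlt_dec 0 x); [|lra]. apply Sg, P1; lra. }
  assert (Dec : forall x y, As <= x -> x < y -> y <= Ds -> wfun q Ds y < wfun q Ds x).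
  { apply (strict_decr (wfun q Ds) d As Ds).
    - intros x Hx. unfold d. destruct (Rlt_dec 0 x); [|lra]. apply Wd; lra.
    - intros; apply Cw; lra.
    - intros x Hx. unfold d. destruct (Rlt_dec 0 x); [|lra].
      apply Sg. destruct (Req_dec x As) as [->|Hne]; [rewrite P3 by lra; lra|].
      destruct (Req_dec x Ds) as [->|Hne2]; [rewrite HN; lra|].
      left; apply P2; lra.
    - intros x Hx. unfold d. destruct (Rlt_dec 0 x); [|lra].
      destruct (Rle_dec 0 (NN q Ds x / Fq q (- x) ^ 2)); [|lra].
      exfalso. assert (NN q Ds x < 0) by (apply P2; lra).
      assert (NN q Ds x / Fq q (- x) ^ 2 <= 0) by (apply Sg; lra). 
      assert (NN q Ds x / Fq q (- x) ^ 2 = 0) by lra.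
      assert (0 < / Fq q (-x) ^ 2) by (apply Rinv_0_lt_compat; auto).
      unfold Rdiv in *. nra. }
  assert (Mx : forall A, 0 <= A <= Ds -> A <> As -> wfun q Ds A < wfun q Ds As).
  { intros A HA Hne. destruct (Rlt_dec A As).
    - apply Inc; lra.
    - apply Dec; lra. }
  exists As. split; [split; [auto|]|split; [|split; [auto|split; [|split; [|auto]]]]].
  - intros A HA. destruct (Req_dec A As) as [->|Hne]; [lra|]. left; apply Mx; auto.
  - intros B HB HBm. destruct (Req_dec B As) as [|Hne]; auto.
    exfalso. specialize (HBm As HAsr). specialize (Mx B HB Hne). lra.
  - intros A HA. destruct (Req_dec A 0) as [->|Hne].
    + exists l0; auto.
    + exists (Finite (NN q Ds A / (Fq q (-A))^2)). apply deriv_rderiv, Wd; lra.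
  - intros A l HA Hl. destruct (Req_dec A 0) as [->|Hne].
    + rewrite (rderiv_unique _ _ _ _ Hl Hl0).
      destruct (Rlt_dec 1 q) as [Hq1|Hq1].
      * specialize (Hl0a Hq1). assert (As <> 0) by (intro Hc; apply P5 in Hc; lra).
        split; intros Hc.
        -- exfalso. destruct l0; simpl in *; lra.
        -- lra.
      * specialize (Hl0b ltac:(lra)). assert (As = 0) by (apply P5; lra).
        split; intros; [lra|]. destruct l0; simpl in *; lra.
    + assert (HA0 : 0 < A) by lra.
      rewrite (rderiv_unique _ _ _ _ Hl (deriv_rderiv _ _ _ (Wd A HA0))). simpl.
      rewrite (proj2 (Sg A)). split; intros Hc.
      * destruct (Rle_dec As A) as [|Hlt]; auto. exfalso.
        assert (0 < NN q Ds A) by (apply P1; lra). lra.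
      * destruct (Req_dec A As) as [->|Hne2]; [rewrite P3 by lra; lra|].
        destruct (Req_dec A Ds) as [->|Hne3]; [rewrite HN; lra|].
        left; apply P2; lra.
Qed.
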